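(* Let $f:X\to\mathcal G$ be convex and $x_0\in\operatorname{dom} f$. If $x_0$ solves the scalarized Stampacchia inequality, i.e. $f(x_0)=Z$ or for all $x\in\operatorname{dom}f$ with $f(x)\ne f(x_0)$ there exists $z^*\in C^-\setminus\{0\}$ with $0<\varphi'_{f,z^*}(x_0,x-x_0)$, then it solves the set-valued Stampacchia inequality, i.e. $f(x_0)=Z$ or for all $x\in\operatorname{dom} f$ with $f(x)\neq f(x_0)$ one has $0\notin f'(x_0,x-x_0)$. If additionally the weak regularity condition $f'(x,u)=\bigcap_{z^*\in C^-\setminus\{0\}}f'_{z^*}(x,u)$ holds for all $x,u\in X$, then $x_0$ solves the set-valued Stampacchia inequality if and only if it solves the scalarized one.
   Context: $X$ real linear space, $Z$ real locally convex Hausdorff space with dual $Z^*$, $C\subseteq Z$ closed convex cone, $0\in C$, $C^-=\{z^*:z^*(c)\le0\ \forall c\in C\}$, $C^-\setminus\{0\}\ne\emptyset$. $\mathcal G=\{A\subseteq Z:A=\operatorname{cl}\operatorname{co}(A+C)\}$; $A\oplus B=\operatorname{cl}\{a+b\}$, $tA=\{ta\}$ ($t>0$), $A\ominus B=\{z:B+\{z\}\subseteq A\}$. $f$ convex: $f(tx_1+(1-t)x_2)\supseteq tf(x_1)\oplus(1-t)f(x_2)$; $\operatorname{dom}f=\{x:f(x)\ne\emptyset\}$. For $g:X\to\mathcal G$, $g'(x,u)=\bigcap_{t_0>0}\operatorname{cl}\operatorname{co}\bigcup_{0<t<t_0}\frac1t(g(x+tu)\ominus g(x))$. On $\overline{\mathbb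 R}$: inf-addition $\dot+$ ($(-\infty)\dot+(+\infty)=+\infty$), $r\ominus s=\inf\{t\in\mathbb R:r\le s\dot+t\}$ ($\inf\emptyset=+\infty$). $\varphi_{f,z^*}(x)=\inf\{-z^*(z):z\in f(x)\}$ ($+\infty$ if $f(x)=\emptyset$), $\varphi'_{f,z^*}(x,u)=\inf_{t>0}\frac1t(\varphi_{f,z^*}(x+tu)\ominus\varphi_{f,z^*}(x))$. $f_{z^*}(x)=\{z:\varphi_{f,z^*}(x)\le -z^*(z)\}$, $f'_{z^*}$ its directional derivative. *)

(* Defs.v *)
From HB Require Import structures.
From mathcomp Require Import all_boot all_order all_algebra.
From mathcomp Require Import all_classical all_reals all_analysis.
Set Implicit Arguments. Unset Strict Implicit. Unset Printing Implicit Defensive.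
Import Order.TTheory GRing.Theory Num.Theory.
Local Open Scope classical_set_scope.
Local Open Scope ring_scope.

Section Defs.
Variable R : realType.

Section LinSets.
Variable Z : lmodType R.

Definition msum (A B : set Z) : set Z :=
  [set z | exists a b, A a /\ B b /\ z = a + b].

Definition mscale (t : R) (A : set Z) : set Z := [set t *: a | a in A].

Definition mdiff (A B : set Z) : set Z := [set z | forall b, B b -> A (b + z)].

Definition conv_hull (A : set Z) : set Z :=
  \bigcap_(B in [set B : set Z | convex_set (B : set (convex_lmodType Z)) /\
                                 A `<=` B]) B.
End LinSets.

Section TvsSets.
Variable Z : tvsType R.

Definition clco (A : set Z) : set Z := closure (conv_hull A).

Definition oplus (A B : set Z) : set Z := closure (msum A B).

Definition inG (C A : set Z) : Prop := A = clco (msum A C).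

Definition is_dual (zs : Z -> R) : Prop :=
  linear_for *%R zs /\ continuous (zs : Z -> R^o).

Definition negdual_nz (C : set Z) : set (Z -> R) :=
  [set zs | is_dual zs /\ (forall c, C c -> zs c <= 0) /\ zs <> (fun _ => 0)].

Definition closed_convex_cone (C : set Z) : Prop :=
  closed C /\ convex_set (C : set (convex_lmodType Z)) /\
  (forall (t : R) c, 0 < t -> C c -> C (t *: c)).

Section Fun.
Variable X : lmodType R.

Definition set_convex (f : X -> set Z) : Prop :=
  forall x1 x2 (t : R), 0 < t < 1 ->
    oplus (mscale t (f x1)) (mscale (1 - t) (f x2)) `<=`
    f (t *: x1 + (1 - t) *: x2).

Definition dom (f : X -> set Z) : set X := [set x | f x <> set0].

Definition sdir (g : X -> set Z) (x u : X) : set Z :=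
  \bigcap_(t0 in [set t0 : R | 0 < t0])
     clco (\bigcup_(t in [set t : R | 0 < t < t0])
             mscale t^-1 (mdiff (g (x + t *: u)) (g x))).

(* inf-addition on the extended reals: (-oo) .+ (+oo) = +oo *)
Definition iadd (a b : \bar R) : \bar R :=
  match a, b with
  | +oo%E, _ => +oo%E
  | _, +oo%E => +oo%E
  | -oo%E, _ => -oo%E
  | _, -oo%E => -oo%E
  | (r%:E)%E, (s%:E)%E => ((r + s)%:E)%E
  end.

Definition ediff (r s : \bar R) : \bar R :=
  ereal_inf [set (t%:E)%E | t in [set t : R | (r <= iadd s (t%:E))%E]].

(* phi_{f,z*}(x) = inf {-z*(z) : z in f(x)} (= +oo if f(x) empty) *)
Definition phi (f : X -> set Z) (zs : Z -> R) (x : X) : \bar R :=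
  ereal_inf [set ((- zs z)%:E)%E | z in f x].

Definition phi_dir (f : X -> set Z) (zs : Z -> R) (x u : X) : \bar R :=
  ereal_inf [set ((t^-1)%:E * ediff (phi f zs (x + t *: u)) (phi f zs x))%E
            | t in [set t : R | 0 < t]].

Definition fscal (f : X -> set Z) (zs : Z -> R) (x : X) : set Z :=
  [set z | (phi f zs x <= (- zs z)%:E)%E].

Definition scalar_stampacchia (C : set Z) (f : X -> set Z) (x0 : X) : Prop :=
  f x0 = setT \/
  forall x, dom f x -> f x <> f x0 ->
    exists2 zs, negdual_nz C zs & (0 < phi_dir f zs x0 (x - x0))%E.

Definition setvalued_stampacchia (f : X -> set Z) (x0 : X) : Prop :=
  f x0 = setT \/
  forall x, dom f x -> f x <> f x0 -> ~ sdir f x0 (x - x0) 0.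

Definition weak_regular (C : set Z) (f : X -> set Z) : Prop :=
  forall x u, sdir f x u =
    \bigcap_(zs in negdual_nz C) sdir (fscal f zs) x u.
End Fun.
End TvsSets.
End Defs.

(* Main.v *)
Require Import Defs.
From HB Require Import structures.
From mathcomp Require Import all_boot all_order all_algebra.
From mathcomp Require Import all_classical all_reals all_analysis.
From mathcomp Require Import ring lra.
Set Implicit Arguments. Unset Strict Implicit. Unset Printing Implicit Defensive.
Import Order.TTheory GRing.Theory Num.Theory.
Local Open Scope classical_set_scope.
Local Open Scope ring_scope.
Section S.
Variable R : realType.
Variable X : lmodType R.
Variable Z : tvsType R.
Implicit Type zs : Z -> R.

Lemma dual_add zs : is_dual zs -> forall u v, zs (u + v) = zs u + zs v.
Proof. by case=> hl _ u v; rewrite -[u in LHS]scale1r hl mul1r. Qed.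
Lemma dual0 zs : is_dual zs -> zs 0 = 0.
Proof. move=> h; have := dual_add h 0 0; rewrite addr0 -{1}[zs 0]addr0 => /addrI. by move=> <-. Qed.
Lemma dual_scale zs : is_dual zs -> forall a u, zs (a *: u) = a * zs u.
Proof. move=> h a u; have [hl _] := h. by rewrite -[a *: u]addr0 hl dual0 // addr0. Qed.
Lemma dual_opp zs : is_dual zs -> forall u, zs (- u) = - zs u.
Proof. by move=> h u; rewrite -scaleN1r dual_scale // mulN1r. Qed.

Local Open Scope ereal_scope.
Lemma iaddE (s : \bar R) (t : R) : iadd s t%:E = s + t%:E.
Proof. by case: s. Qed.
Lemma ediff_le (r s : \bar R) (t : R) : r <= iadd s t%:E -> ediff r s <= t%:E.
Proof. by move=> h; apply: ereal_inf_lbound; exists t. Qed.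
Lemma ediff_lt (r s : \bar R) (c : R) : ediff r s < c%:E ->
  exists2 t : R, (t < c)%R & r <= s + t%:E.
Proof. by move=> /ereal_inf_lt[_ [t /= h <-]]; rewrite lte_fin => tc; exists t; rewrite // -iaddE. Qed.
Lemma mulV_lt (t : R) (e : \bar R) (c : R) : (0 < t)%R ->
  (t^-1)%:E * e < c%:E -> e < (t * c)%:E.
Proof.
move=> t0; case: e => [r||] //=.
- rewrite -EFinM !lte_fin => h. by rewrite -ltr_pdivrMl.
- by rewrite gt0_muley ?lte_fin ?invr_gt0.
- by rewrite ltNyr.
Qed.
Lemma phi_shift (f : X -> set Z) zs x y w : is_dual zs ->
  (forall b, f x b -> f y (b + w)%R) -> phi f zs y <= phi f zs x + (- zs w)%:E.
Proof.
move=> hd hb; rewrite -leeBlDr //; apply: le_ereal_inf_tmp => _ [b fb <-].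
rewrite leeBlDr // -EFinD; apply: ereal_inf_lbound; exists (b + w)%R; first exact: hb.
by rewrite dual_add // opprD.
Qed.
Lemma sdir_phi (f : X -> set Z) zs x u z : is_dual zs -> sdir f x u z ->
  phi_dir f zs x u <= (- zs z)%:E.
Proof.
move=> hd hz.
set p := phi_dir f zs x u.
pose S := [set z : Z | p <= (- zs z)%:E].
have Sc : convex_set (S : set (convex_lmodType Z)).
  move=> z1 z2 l; rewrite !inE /S /= => h1 h2.
  rewrite dual_add // !dual_scale //.
  have l0 : (0 <= l%:num)%R by [].
  have l1 : (l%:num <= 1)%R by [].
  move: h1 h2; case E: p => [r||] //= h1 h2; last by rewrite leNye.
  rewrite lee_fin; rewrite !lee_fin in h1 h2; rewrite /unstable.onem; nra.
have Scl : closed S.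
  case E: p => [r||].
  - have -> : S = zs @^-1` [set y | (y <= - r)%R].
      by apply/seteqP; split => y /=; rewrite /S /= E lee_fin lerNr.
    apply: (@preimage_closed _ R^o); [move=> y _; exact: hd.2 y | ].
    exact: closed_le.
  - have -> : S = set0 by apply/seteqP; split => y //=; rewrite /S /= E.
    exact: closed0.
  - have -> : S = setT by apply/seteqP; split => y //= _; rewrite /S /= E leNye.
    exact: closedT.
have := hz 1%R ltr01.
rewrite /clco => hc; apply: Scl; move: hc; apply: closureS.
move=> y hy; apply: hy; split => //.
move=> _ [t /andP[t0 _] [w hw <-]].
  rewrite /S /=.
  apply: (@le_trans _ _ ((t^-1)%R%:E * ediff (phi f zs (x + t *: u)) (phi f zs x))).
    by apply: ereal_inf_lbound; exists t.
  rewrite dual_scale // -mulrN EFinM; apply: lee_wpmul2l.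
    by rewrite lee_fin invr_ge0 ltW.
  apply: ediff_le; rewrite iaddE; apply: phi_shift => // b hb; exact: hw.
Qed.

Lemma memA (f : X -> set Z) zs x u (t : R) z : is_dual zs -> (0 < t)%R ->
  (t^-1)%R%:E * ediff (phi f zs (x + t *: u)) (phi f zs x) < (- zs z)%:E ->
  Defs.mscale (t^-1)%R (mdiff (fscal f zs (x + t *: u)%R) (fscal f zs x)) z.
Proof.
move=> hd t0 /(mulV_lt t0)/ediff_lt [t' t'c hr].
exists (t *: z); last by rewrite scalerA mulVf ?gt_eqF // scale1r.
move=> b hb; rewrite /fscal /= in hb *.
apply: (le_trans hr); apply: (le_trans (leeD2r _ hb)).
rewrite -EFinD lee_fin dual_add // dual_scale //; lra.
Qed.

Lemma monoC (f : X -> set Z) zs x u s t (c : R) : set_convex f -> is_dual zs ->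
  (0 < s)%R -> (s < t)%R ->
  (t^-1)%R%:E * ediff (phi f zs (x + t *: u)) (phi f zs x) < c%:E ->
  (s^-1)%R%:E * ediff (phi f zs (x + s *: u)) (phi f zs x) < c%:E.
Proof.
move=> hf hd s0 st.
have t0 : (0 < t)%R by apply: lt_trans st.
move=> /(mulV_lt t0)/ediff_lt [t2 t2c hr].
pose l := (s / t)%R. pose t3 := ((t2 + t * c) / 2)%R.
have l0 : (0 < l)%R by rewrite /l divr_gt0.
have l1 : (l < 1)%R by rewrite /l ltr_pdivrMr // mul1r.
have key : phi f zs (x + s *: u) <= phi f zs x + (l * t3)%:E.
  rewrite -leeBlDr //; apply: le_ereal_inf_tmp => _ [b hb <-].
  rewrite leeBlDr //.
  have : phi f zs (x + t *: u) < (- zs b + t3)%:E.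
    apply: (le_lt_trans hr).
    apply: (@le_lt_trans _ _ ((- zs b)%:E + t2%:E)).
      by apply: leeD2r; apply: ereal_inf_lbound; exists b.
    by rewrite -EFinD lte_fin /t3; lra.
  move/ereal_inf_lt => [_ [a ha <-]]; rewrite lte_fin => ha'.
  apply: (@le_trans _ _ (- zs (l *: a + (1 - l) *: b))%:E).
    apply: ereal_inf_lbound; exists (l *: a + (1 - l) *: b)%R => //.
    have -> : (x + s *: u = l *: (x + t *: u) + (1 - l) *: x)%R.
      have lt : (l * t = s)%R by rewrite /l divfK // gt_eqF.
      by rewrite scalerDr scalerA lt addrAC -scalerDl [(l + _)%R]addrC subrK scale1r.
    apply: hf; first by rewrite l0 l1.
    apply: subset_closure; exists (l *: a)%R, ((1 - l) *: b)%R; split.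
      by exists a.
    by split => //; exists b.
  rewrite -EFinD lee_fin dual_add // !dual_scale //; nra.
apply: (@le_lt_trans _ _ (s^-1 * (l * t3))%R%:E).
  rewrite EFinM; apply: lee_wpmul2l; first by rewrite lee_fin invr_ge0 ltW.
  by apply: ediff_le; rewrite iaddE.
have -> : (s^-1 * (l * t3) = t3 / t)%R.
  by rewrite /l; field; rewrite ?gt_eqF.
by rewrite lte_fin ltr_pdivrMr // /t3; lra.
Qed.

Lemma sdir_fscal (f : X -> set Z) zs x u : set_convex f -> is_dual zs ->
  zs <> (fun _ => 0%R) -> phi_dir f zs x u <= 0 -> sdir (fscal f zs) x u 0%R.
Proof.
move=> hf hd hnz hp t0 t0pos; rewrite /= in t0pos.
rewrite /clco.
pose P := [set z : Z | (0 < - zs z)%R].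
apply: (@closureS _ P).
  move=> z hz B [_ hUB]; apply: hUB.
  have : phi_dir f zs x u < (- zs z)%:E by apply: (le_lt_trans hp); rewrite lte_fin.
  move/ereal_inf_lt => [_ [t tpos <-] ht]; rewrite /= in tpos.
  have [h|h] := ltP (t0 / 2)%R t.
    have h2 : (0 < t0 / 2)%R by rewrite divr_gt0.
    exists (t0 / 2)%R; first by rewrite /= h2 ltr_pdivrMr // ltr_pMr //; lra.
    by apply: memA => //; apply: monoC ht.
  exists t; first by rewrite /= tpos; lra.
  exact: memA.
have [v hv] : exists v, zs v != 0%R.
  apply: contrapT => hn; apply: hnz; apply/funext => v; apply/eqP.
  apply: contrapT => hv; apply: hn; exists v; exact/negP.
pose w := ((- zs v)^-1 *: v)%R.
have hw : (- zs w = 1)%R.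
  by rewrite /w dual_scale // invrN mulNr opprK mulVf.
have hc : {for (0%R : R^o), continuous (fun k : R^o => k *: w)%R}.
  apply: (@continuous_comp _ _ _ (fun k : R^o => (k, w)) (fun z : R^o * Z => (z.1 *: z.2)%R)).
    exact: (cvg_pair cvg_id (cvg_cst w)).
  exact: scale_continuous.
move=> B hB.
have := hc B; rewrite scale0r => /(_ hB) /nbhs_ballP [e e0 he].
exists ((e / 2) *: w)%R; split.
  by rewrite /P /= dual_scale // -mulrN hw mulr1 divr_gt0.
apply: he; rewrite /ball /= sub0r normrN gtr0_norm ?divr_gt0 //; rewrite /= in e0; lra.
Qed.
End S.

Unset Implicit Arguments.

Theorem mainTheorem12 (R : realType) (X : lmodType R) (Z : tvsType R)
  (C : set Z) (f : X -> set Z) (x0 : X) :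
  hausdorff_space Z ->
  closed_convex_cone C -> C 0 ->
  negdual_nz C !=set0 ->
  (forall x, inG C (f x)) ->
  set_convex f ->
  dom f x0 ->
  (scalar_stampacchia C f x0 -> setvalued_stampacchia f x0) /\
  (weak_regular C f ->
     (setvalued_stampacchia f x0 <-> scalar_stampacchia C f x0)).
Proof.
move=> _ _ _ _ _ hf hx0.
have P1 : scalar_stampacchia C f x0 -> setvalued_stampacchia f x0.
  case=> [h|h]; [by left | right] => x hx hne h0.
  have [zs [hd _] hpos] := h x hx hne.
  have := sdir_phi hd h0; rewrite dual0 // oppr0 => hle.
  by move: hpos; rewrite ltNge hle.
split => // hw; split => //.
case=> [h|h]; [by left|right] => x hx hne.
have := h x hx hne; rewrite (hw x0 (x - x0)) => hn.
apply: contrapT => hall; apply: hn => zs hzs.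
apply: sdir_fscal => //; [exact: hzs.1 | exact: hzs.2.2 |].
rewrite leNgt; apply/negP => hlt; apply: hall; by exists zs.
Qed.
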